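(* Let $\alpha\ge2$, $\varepsilon\ge0$, $\ell,t\ge1$ and $1\le h\le\alpha\ell+\varepsilon$ be integers, and $q$ a prime power. Let $\gamma=3.48$, $\beta=\big(\frac{(\alpha-1)!}{2e\gamma\alpha}\big)^{1/(\alpha-1)}$ and $f(t)=(\alpha\ell+\varepsilon-h)\varepsilon t^2+(\alpha\ell+2\varepsilon-h)t+1$. If $r\le\beta\,q^{f(t)/(\alpha-1)}$, then the $(\varepsilon,\ell)$-$\mathcal N_{h,r,\alpha\ell+\varepsilon}$ network has a $(q,t)$-linear solution, i.e., there exist matrices $\boldsymbol A_1,\dots,\boldsymbol A_r\in\mathbb F_q^{\ell t\times ht}$ such that for every $1\le i_1<\dots<i_\alpha\le r$ the stacked matrix $\begin{pmatrix}\boldsymbol A_{i_1}\\ \vdots\\ \boldsymbol A_{i_\alpha}\end{pmatrix}$ has rank at least $(h-\varepsilon)t$.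
   Context: The generalized combination network $(\varepsilon,\ell)$-$\mathcal N_{h,r,\alpha\ell+\varepsilon}$ has a source with $h$ messages, $r$ middle nodes each connected to the source by $\ell$ parallel links, and one receiver for each $\alpha$-subset of middle nodes, connected to each of those $\alpha$ nodes by $\ell$ links and to the source by $\varepsilon$ direct links. A $(q,t)$-linear solution (messages in $\mathbb F_q^t$) exists if and only if there are coding matrices $\boldsymbol A_1,\dots,\boldsymbol A_r\in\mathbb F_q^{\ell t\times ht}$ for the middle nodes such that every $\alpha$ of them stacked have rank at least $(h-\varepsilon)t$ (the direct links then supply the remaining information). $e$ is Euler's number. *)

(* Defs.v *)
From Stdlib Require Import Reals.
From mathcomp Require Import all_boot all_order all_algebra all_field.
Set Implicit Arguments. Unset Strict Implicit. Unset Printing Implicit Defensive.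
Import GRing.Theory.
Local Open Scope R_scope.
Local Notation "x / y" := (Rdiv x y) : R_scope.

Definition gamma_const : R := 348 / 100.

Definition beta_const (alpha : nat) : R :=
  Rpower (INR ((alpha - 1)`!) / (2 * exp 1 * gamma_const * INR alpha))
         (1 / INR (alpha - 1)).

(* f(t) = (alpha l + eps - h) eps t^2 + (alpha l + 2 eps - h) t + 1 (all terms nonnegative
   since h <= alpha l + eps) *)
Local Close Scope R_scope.
Definition f_exp (alpha eps l h t : nat) : nat :=
  (alpha * l + eps - h) * eps * t ^ 2 + (alpha * l + 2 * eps - h) * t + 1.

Definition stack (F : fieldType) (r alpha m n : nat) (A : 'I_r -> 'M[F]_(m, n))
  (s : 'I_alpha -> 'I_r) : 'M[F]_(\sum_(i < alpha) m, n) :=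
  \mxcol_(i < alpha) A (s i).

(* Main.v *)
Require Import Defs.
From Stdlib Require Import Reals Lra Lia.
From mathcomp Require Import all_boot all_order all_algebra all_field zify.
Set Implicit Arguments. Unset Strict Implicit. Unset Printing Implicit Defensive.
Import GRing.Theory.

Section Count.
Variable F : finFieldType.

Definition lowrk N M s := [set X : 'M[F]_(N,M) | \rank X <= s].

Lemma vec_in_count N M (X : 'M[F]_(N,M)) :
  #|[set x : 'rV_M | (x <= X)%MS]| <= #|F| ^ (\rank X).
Proof.
have -> : [set x : 'rV_M | (x <= X)%MS] =
   [set (y *m row_base X)%R | y in [set: 'rV_(\rank X)]].
  apply/setP => x; rewrite inE; apply/idP/imsetP.
    move=> Hx; have: (x <= row_base X)%MS by rewrite ((eq_row_base X).2 1 x).2.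
    by move/submxP => [D ->]; exists D.
  by move=> [y _ ->]; rewrite -((eq_row_base X).2 1 _).2; apply: submxMl.
rewrite card_imset; last by apply: row_free_inj; apply: row_base_free.
by rewrite cardsT card_mx mul1n.
Qed.

Lemma lowrk_rec N M s :
  #|lowrk (1 + N) M s.+1| <=
    #|F| ^ M * #|lowrk N M s| + #|F| ^ s.+1 * #|lowrk N M s.+1|.
Proof.
pose f := fun p : 'rV[F]_M * 'M[F]_(N,M) => col_mx p.1 p.2.
have finj : injective f.
  by move=> [x X] [y Y]; rewrite /f /= => /eq_col_mx [-> ->].
have -> : lowrk (1 + N) M s.+1 = f @: [set p | \rank (f p) <= s.+1].
  apply/setP => C; rewrite inE; apply/idP/imsetP.
    move=> HC; exists (usubmx C, dsubmx C); first by rewrite inE /f /= vsubmxK.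
    by rewrite /f /= vsubmxK.
  by move=> [p]; rewrite inE => Hp ->.
rewrite card_imset //.
pose S1 := setX [set: 'rV[F]_M] (lowrk N M s).
pose S2 := [set p : 'rV[F]_M * 'M[F]_(N,M) | (p.2 \in lowrk N M s.+1) && (p.1 <= p.2)%MS].
have sub : [set p | \rank (f p) <= s.+1] \subset S1 :|: S2.
  apply/subsetP => [[x X]]; rewrite !inE /f /= => Hr.
  have HX : (X <= col_mx x X)%MS by rewrite -addsmxE addsmxSr.
  have lXC := mxrankS HX.
  case: (leqP (\rank X) s) => [HXs // | lt] /=.
  have eqr : \rank X = \rank (col_mx x X).
    by apply/eqP; rewrite eqn_leq lXC; apply: leq_trans Hr _.
  rewrite (leq_trans (eq_leq eqr) Hr) /=.
  have /eqP := eqr; rewrite (mxrank_leqif_eq HX) => /andP [_ CX].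
  apply: submx_trans CX; rewrite -addsmxE addsmxSl //.
apply: leq_trans (subset_leq_card sub) _.
apply: leq_trans (leq_card_setU _ _) _.
apply: leq_add; first by rewrite cardsX cardsT card_mx mul1n.
have -> : #|S2| = \sum_(X in lowrk N M s.+1) #|[set x : 'rV_M | (x <= X)%MS]|.
  rewrite -sum1_card big_mkcond /=.
  rewrite (eq_bigr (fun p => (fun x X => if (X \in lowrk N M s.+1) && (x <= X)%MS then 1 else 0) p.1 p.2)); last first.
    by move=> [x X] _; rewrite inE.
  rewrite -(pair_bigA _ (fun x X => if (X \in lowrk N M s.+1) && (x <= X)%MS then 1 else 0)) /= exchange_big /=.
  rewrite [RHS]big_mkcond /=; apply: eq_bigr => X _.
  case: (X \in lowrk N M s.+1) => /=; last by rewrite big1.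
  by rewrite -sum1_card [RHS]big_mkcond /=; apply: eq_bigr => x _; rewrite inE.
rewrite mulnC -sum_nat_const; apply: leq_sum => X; rewrite inE => HX.
apply: leq_trans (vec_in_count X) _.
by rewrite leq_pexp2l // (ltnW (card_finNzRing_gt1 F)).
Qed.

Lemma lowrk0 N M : #|lowrk N M 0| <= 1.
Proof.
rewrite -(cards1 (0%R : 'M[F]_(N,M))).
apply: subset_leq_card; apply/subsetP => X; rewrite !inE leqn0 mxrank_eq0 //.
Qed.

Lemma lowrk_all N M s : #|lowrk N M s| <= #|F| ^ (N * M).
Proof. by rewrite -card_mx; apply: max_card. Qed.
End Count.
Section R1Sec.
Local Open Scope R_scope.

Lemma INR_expn a b : INR (a ^ b)%N = (INR a ^ b).
Proof. elim: b => [|b IH] //; by rewrite expnS mulnE mult_INR IH. Qed.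
Lemma INR_muln a b : INR (a * b)%N = (INR a * INR b).
Proof. by rewrite mulnE mult_INR. Qed.
Lemma INR_addn a b : INR (a + b)%N = (INR a + INR b).
Proof. by rewrite addnE plus_INR. Qed.
Lemma INR_leq a b : (a <= b)%N -> (INR a <= INR b).
Proof. by move/leP; apply: le_INR. Qed.

Lemma pow_addn x a b : x ^ (a + b)%N = x ^ a * x ^ b.
Proof. by rewrite addnE pow_add. Qed.

Fixpoint Pd (x : R) (d : nat) : R :=
  match d with 0%nat => 1 | S d' => Pd x d' * (1 - x ^ (S d')) end.

Lemma Pd_bounds x d : 0 <= x <= 1/2 -> 0 <= Pd x d <= 1.
Proof.
move=> Hx; elim: d => [|d IH]; first by simpl; lra.
change (Pd x d.+1) with (Pd x d * (1 - x ^ d.+1)).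
have h1 : 0 <= x ^ d.+1 <= 1.
  split; first by apply: pow_le; lra.
  rewrite -(pow1 d.+1); apply: pow_incr; lra.
split; [apply: Rmult_le_pos; lra | ].
have : Pd x d * (1 - x ^ d.+1) <= 1 * 1 by apply: Rmult_le_compat; lra.
lra.
Qed.

Lemma Pd_ge x d : 0 <= x <= 1/2 -> 1/4 + x ^ d.+1 / 2 <= Pd x d.+1.
Proof.
move=> Hx; elim: d => [|d IH].
  change (Pd x 1) with (1 * (1 - x ^ 1)); rewrite pow_1; lra.
change (Pd x d.+2) with (Pd x d.+1 * (1 - x ^ d.+2)).
have -> : x ^ d.+2 = x * x ^ d.+1 by [].
have hy : 0 <= x ^ d.+1 <= 1/2.
  split; first by apply: pow_le; lra.
  rewrite -(pow1 d) /= ; have : x ^ d <= 1 ^ d by apply: pow_incr; lra.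
  move=> h; have : 0 <= x ^ d by apply: pow_le; lra.
  nra.
set y := x ^ d.+1 in IH hy *.
have h1 : 0 <= 1 - x * y by nra.
have : (1/4 + y/2) * (1 - x * y) <= Pd x d.+1 * (1 - x * y) by apply: Rmult_le_compat_r.
nra.
Qed.

Lemma Pd_quarter x d : 0 <= x <= 1/2 -> 1/4 <= Pd x d.
Proof.
move=> Hx; case: d => [|d]; first by simpl; lra.
have := Pd_ge d Hx; have : 0 <= x ^ d.+1 by apply: pow_le; lra.
lra.
Qed.

Section CountR.
Variable F : finFieldType.
Let q := INR #|F|.
Lemma q_ge2 : 2 <= q.
Proof. rewrite /q; have := card_finNzRing_gt1 F => /INR_leq H; simpl in H.
apply: (Rle_trans _ (1+1)); [lra | exact: H]. Qed.

Lemma lowrk_bound N M s : (s <= N)%N -> (s <= M)%N ->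
  INR #|lowrk F N M s| * Pd (/ q) (N - s) <= q ^ (s * (N + M - s)).
Proof.
have q2 := q_ge2.
have hx : 0 <= / q <= 1/2.
  split; first by apply: Rlt_le; apply: Rinv_0_lt_compat; lra.
  rewrite /Rdiv Rmult_1_l; apply: Rinv_le_contravar; lra.
have cardF : forall n, INR (#|F| ^ n)%N = q ^ n by move=> n; rewrite INR_expn.
elim: N s => [|N IH] s hsN hsM.
  have -> : s = 0%N by apply/eqP; rewrite -leqn0.
  have := lowrk0 F 0 M => /INR_leq; rewrite /= => h; lra.
case: s hsN hsM => [|s'] hsN hsM.
  have := lowrk0 F N.+1 M => /INR_leq /= h.
  have [h1 h2] := Pd_bounds N.+1 hx.
  change (Pd (/ q) N * (1 - / q * (/ q) ^ N)) with (Pd (/ q) N.+1).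
  have : INR #|lowrk F N.+1 M 0| * Pd (/ q) N.+1 <= 1 * 1.
    by apply: Rmult_le_compat; [exact: pos_INR|lra|exact: h|lra].
  move=> H; apply: (Rle_trans _ _ _ H); lra.
case: (ltngtP s' N) => hs; last first.
  - subst s'; rewrite subnn /= Rmult_1_r.
    have -> : (N.+1 * (N.+1 + M - N.+1) = N.+1 * M)%N by nia.
    by rewrite -cardF; apply: INR_leq; apply: lowrk_all.
  - by exfalso; move: hsN; rewrite ltnS leqNgt hs.
have rec := lowrk_rec F N M s'.
have [k hk] : exists k, N = (s' + k.+1)%N by exists (N - s'.+1)%N; lia.
have [m hm] : exists m, M = (s'.+1 + m)%N by exists (M - s'.+1)%N; lia.
have IH1 := IH s' (ltnW hs) (leq_trans (leqnSn _) hsM).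
have IH2 := IH s'.+1 hs hsM.
have d1 : (N - s' = k.+1)%N by lia.
have d2 : (N - s'.+1 = k)%N by lia.
have d3 : (N.+1 - s'.+1 = k.+1)%N by lia.
rewrite d1 in IH1; rewrite d2 in IH2; rewrite d3.
have e1 : (M + s' * (N + M - s') + k.+1 = s'.+1 * (N.+1 + M - s'.+1))%N.
  by rewrite hk hm; nia.
have e2 : (s'.+1 + s'.+1 * (N + M - s'.+1) = s'.+1 * (N.+1 + M - s'.+1))%N.
  by rewrite hk hm; nia.
have recR : INR #|lowrk F N.+1 M s'.+1| <=
   q ^ M * INR #|lowrk F N M s'| + q ^ s'.+1 * INR #|lowrk F N M s'.+1|.
  have := INR_leq rec; rewrite INR_addn !INR_muln !cardF => H; exact: H.
change (Pd (/ q) k.+1) with (Pd (/ q) k * (1 - (/ q) ^ k.+1)) in IH1 |- *.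
have eqQ : q ^ s'.+1 * q ^ (s'.+1 * (N + M - s'.+1)) =
    q ^ M * q ^ (s' * (N + M - s')) * q ^ k.+1.
  by rewrite -!pow_addn e1 e2.
move: IH1 IH2 recR eqQ; rewrite -e1 (pow_addn q (M + _) k.+1) (pow_addn q M).
set A1 := q ^ (s' * (N + M - s')).
set A2 := q ^ (s'.+1 * (N + M - s'.+1)).
set c := INR #|lowrk F N.+1 M s'.+1|.
set c1 := INR #|lowrk F N M s'|.
set c2 := INR #|lowrk F N M s'.+1|.
set P := Pd (/ q) k.
rewrite pow_inv.
set b := q ^ k.+1.
set QM := q ^ M. set Qs := q ^ s'.+1.
have hb : 1 <= b by rewrite /b; apply: pow_R1_Rle; lra.
have hP : 0 <= P by rewrite /P; have [] := Pd_bounds k hx.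
have hc : 0 <= c by apply: pos_INR.
have hqM : 0 < QM by apply: pow_lt; lra.
have hqs : 0 < Qs by apply: pow_lt; lra.
move=> I1 I2 R0 eqQ.
have hib : 0 <= 1 - / b <= 1.
  have : 0 < / b by apply: Rinv_0_lt_compat; lra.
  have : / b <= 1 by rewrite -Rinv_1; apply: Rinv_le_contravar; lra.
  lra.
have S1 : c * (P * (1 - / b)) <= (QM * c1 + Qs * c2) * (P * (1 - / b)).
  by apply: Rmult_le_compat_r; [apply: Rmult_le_pos; lra | exact: R0].
have S2 : QM * (c1 * (P * (1 - / b))) <= QM * A1 by apply: Rmult_le_compat_l; lra.
have S3 : Qs * (c2 * P) * (1 - / b) <= Qs * A2 * (1 - / b).
  by apply: Rmult_le_compat_r; [lra | apply: Rmult_le_compat_l; lra].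
have S4 : QM * A1 + Qs * A2 * (1 - / b) = QM * A1 * b.
  rewrite eqQ; field; lra.
nra.
Qed.
End CountR.

End R1Sec.

Section Comb.
Variables (F : finFieldType) (m n alpha R s0 : nat).
Notation Mt := 'M[F]_(m, n).

Definition incr (s : {ffun 'I_alpha -> 'I_R}) :=
  [forall i : 'I_alpha, forall j : 'I_alpha, (i < j) ==> (s i < s j)].
Definition badp (A : {ffun 'I_R -> Mt}) (s : {ffun 'I_alpha -> 'I_R}) :=
  \rank (stack A s) <= s0.
Definition badset A := [set s | incr s && badp A s].
Definition Bad' := [set B : {ffun 'I_alpha -> Mt} | \rank (\mxcol_i B i)%R <= s0].

Lemma incr_inj s : incr s -> injective s.
Proof.
move=> /forallP H i j eij; apply/eqP; case: (ltngtP i j) => // hij.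
- by have := implyP (forallP (H i) j) hij; rewrite eij ltnn.
- by have := implyP (forallP (H j) i) hij; rewrite eij ltnn.
- by apply/eqP; apply: val_inj.
Qed.

Lemma Bad'_card : #|Bad'| <= #|lowrk F (\sum_(i < alpha) m) n s0|.
Proof.
have inj : injective (fun B : {ffun 'I_alpha -> Mt} => (\mxcol_i B i)%R).
  by move=> B B' /eq_mxcolP e; apply/ffunP.
rewrite -(card_imset _ inj); apply: subset_leq_card; apply/subsetP => X.
by move=> /imsetP [B]; rewrite !inE => HB ->.
Qed.

Lemma fiber_card s : incr s ->
  #|[set A | badp A s]| <= #|Bad'| * #|Mt| ^ (R - alpha).
Proof.
move=> hs; have sinj := incr_inj hs.
pose D := [pred j : 'I_R | j \notin codom s].
pose g (A : {ffun 'I_R -> Mt}) : {ffun 'I_alpha -> Mt} * {ffun 'I_R -> Mt} :=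
  ([ffun i => A (s i)], [ffun j => if j \in codom s then (0 : Mt)%R else A j]).
have ginj : injective g.
  move=> A A' e; apply/ffunP => j.
  case: (boolP (j \in codom s)) => [/codomP [i ->] | hj].
    by have := congr1 (fun p : {ffun 'I_alpha -> Mt} * {ffun 'I_R -> Mt} => p.1 i) e; rewrite /= !ffunE.
  by have := congr1 (fun p : {ffun 'I_alpha -> Mt} * {ffun 'I_R -> Mt} => p.2 j) e; rewrite /= !ffunE (negbTE hj).
rewrite -(card_imset _ ginj).
apply: leq_trans (_ : #|setX Bad' [set z | z \in pffun_on 0%R D predT]| <= _).
  apply: subset_leq_card; apply/subsetP => p /imsetP [A]; rewrite inE => HA ->.
  rewrite !inE; apply/andP; split.
    rewrite /badp /stack in HA; apply: leq_trans HA; apply: eq_leq; congr (\rank _).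
    by apply: eq_mxcol => i; rewrite ffunE.
  apply/pffun_onP; split; last by move=> z _.
  apply/subsetP => j; rewrite !inE ffunE; case: (j \in codom s) => //=.
  by rewrite eqxx.
rewrite cardsX leq_mul2l; apply/orP; right.
rewrite cardsE card_pffun_on cardT.
have -> : #|D| = R - alpha.
  have h := cardC (mem (codom s)); rewrite card_codom // !card_ord in h.
  have -> : #|D| = #|[predC codom s]| by apply: eq_card => j; rewrite !inE.
  by rewrite -[in RHS]h addKn.
done.
Qed.

Lemma avg : alpha <= R -> exists A0, #|badset A0| * #|Mt| ^ alpha <=
    #|[set s | incr s]| * #|lowrk F (\sum_(i < alpha) m) n s0|.
Proof.
move=> hR.
pose A0 := [arg min_(A < [ffun => (0 : Mt)%R] | true) #|badset A|].
have minP : forall A, #|badset A0| <= #|badset A|.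
  by rewrite /A0; case: arg_minnP => // A _ H B; apply: H.
exists A0.
have e : \sum_(A : {ffun 'I_R -> Mt}) #|badset A| =
         \sum_(s | incr s) #|[set A | badp A s]|.
  transitivity (\sum_(A : {ffun 'I_R -> Mt}) \sum_(s : {ffun 'I_alpha -> 'I_R})
      (if incr s && badp A s then 1 else 0)).
    apply: eq_bigr => A _; rewrite -sum1_card big_mkcond /=.
    by apply: eq_bigr => s _; rewrite inE.
  rewrite exchange_big /= [RHS]big_mkcond /=; apply: eq_big => // s _.
  case: (incr s) => /=; last by rewrite big1.
  by rewrite -sum1_card [RHS]big_mkcond /=; apply: eq_bigr => A _; rewrite inE.
have H1 : #|badset A0| * #|Mt| ^ R <=
    #|[set s | incr s]| * #|Bad'| * #|Mt| ^ (R - alpha).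
  apply: leq_trans (_ : \sum_(A : {ffun 'I_R -> Mt}) #|badset A| <= _).
    have cardA : #|{ffun 'I_R -> Mt}| = #|Mt| ^ R by rewrite card_ffun card_ord.
    rewrite -cardA mulnC -sum_nat_const.
    by apply: leq_sum => A _; apply: minP.
  rewrite e; apply: leq_trans (_ : \sum_(s | incr s) (#|Bad'| * #|Mt|^(R-alpha)) <= _).
    by apply: leq_sum => s hs; apply: fiber_card.
  rewrite -mulnA; apply: eq_leq; rewrite (eq_bigl (mem [set s | incr s])); first by rewrite sum_nat_const.
  by move=> s; rewrite !inE.
have hP : 0 < #|Mt| ^ (R - alpha).
  by rewrite expn_gt0 card_mx expn_gt0 (ltnW (card_finNzRing_gt1 F)).
rewrite -(leq_pmul2r hP) -mulnA -expnD subnKC //.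
apply: leq_trans H1 _; rewrite leq_mul2r; apply/orP; right.
by rewrite leq_mul2l Bad'_card orbT.
Qed.

Lemma incr_card : #|[set s | incr s]| <= 'C(R, alpha).
Proof.
rewrite -card_ltn_sorted_tuples.
pose f (s : {ffun 'I_alpha -> 'I_R}) := [tuple s i | i < alpha].
have finj : injective f.
  move=> s s' e; apply/ffunP => i.
  by have := congr1 (fun t => tnth t i) e; rewrite /f !tnth_mktuple.
rewrite -(card_imset _ finj); apply: subset_leq_card; apply/subsetP => t.
move=> /imsetP [s]; rewrite inE => hs ->; rewrite inE.
rewrite /f /= -map_comp sorted_map.
have H : sorted (relpre val ltn) (enum 'I_alpha).
  by rewrite -sorted_map val_enum_ord iota_ltn_sorted.
apply: sub_sorted H => i j /= hij.
by move/forallP: hs => /(_ i) /forallP /(_ j) /implyP; apply.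
Qed.

Lemma enum_sorted (K : {set 'I_R}) : sorted (relpre val ltn) (enum K).
Proof.
have -> : enum K = filter (mem K) (enum 'I_R) by rewrite enumT.
apply: sorted_filter; first by move=> a b c; apply: ltn_trans.
by rewrite -sorted_map val_enum_ord iota_ltn_sorted.
Qed.

Lemma delete (A0 : {ffun 'I_R -> Mt}) r k : 0 < alpha -> 0 < r ->
  #|badset A0| <= k -> r + k <= R ->
  exists A : 'I_r -> Mt, forall s : 'I_alpha -> 'I_r,
    (forall i j : 'I_alpha, i < j -> s i < s j) -> s0 < \rank (stack A s).
Proof.
move=> ha hr hb hrk.
have hR : 0 < R by apply: leq_trans hr (leq_trans (leq_addr k r) hrk).
pose x0 : 'I_R := Ordinal hR.
pose i0 : 'I_alpha := Ordinal ha.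
pose D := [set (s : {ffun 'I_alpha -> 'I_R}) i0 | s in badset A0].
pose K := ~: D.
have hK : r <= #|K|.
  have h1 := cardsC D; rewrite card_ord in h1.
  have h2 : #|D| <= k by apply: leq_trans (leq_imset_card _ _) hb.
  rewrite /K; lia.
pose e (i : 'I_r) := nth x0 (enum K) i.
have eK : forall i, e i \in K.
  move=> i; rewrite -mem_enum /e; apply: mem_nth; rewrite -cardE.
  exact: leq_trans (ltn_ord i) hK.
have emono : forall i j : 'I_r, i < j -> e i < e j.
  move=> i j hij.
  have := @sorted_ltn_nth _ (relpre val ltn) (fun a b c => @ltn_trans _ _ _) x0 _
     (enum_sorted K) i j.
  rewrite !inE -!cardE; apply; last exact: hij.
    exact: leq_trans (ltn_ord i) hK.
  exact: leq_trans (ltn_ord j) hK.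
exists (fun i => A0 (e i)) => s hs.
rewrite ltnNge; apply/negP => bad.
pose s' : {ffun 'I_alpha -> 'I_R} := [ffun i => e (s i)].
have incs' : incr s'.
  apply/forallP => i; apply/forallP => j; apply/implyP => hij.
  by rewrite !ffunE; apply: emono; apply: hs.
have : s' \in badset A0.
  rewrite inE incs' /= /badp; apply: leq_trans bad; apply: eq_leq.
  rewrite /stack; congr (\rank _); apply: eq_mxcol => i; by rewrite ffunE.
move=> hin; have : s' i0 \in D by apply/imsetP; exists s'.
have := eK (s i0); rewrite inE ffunE => /negP; done.
Qed.
End Comb.
Section R2Sec.
Local Open Scope R_scope.

Lemma exp_pow x n : exp x ^ n = exp (INR n * x).
Proof.
elim: n => [|n IH]; first by rewrite /= Rmult_0_l exp_0.
by rewrite [LHS]/= IH S_INR -exp_plus; congr exp; ring.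
Qed.

Lemma one_plus_pow (a : nat) : (1 <= a)%N -> (1 + 2 / INR a) ^ a <= exp 1 * exp 1.
Proof.
move=> ha.
have hapos : 0 < INR a by apply: lt_0_INR; apply/ltP.
have h1 : 1 + 2 / INR a <= exp (2 / INR a).
  have : 2 / INR a <> 0 by apply: Rgt_not_eq; apply: Rdiv_lt_0_compat; lra.
  move/exp_ineq1; lra.
apply: Rle_trans (pow_incr _ _ a _) _.
  split; last exact: h1.
  have : 0 < 2 / INR a by apply: Rdiv_lt_0_compat; lra.
  lra.
rewrite exp_pow -exp_plus; right; congr exp; field; lra.
Qed.

Lemma key_real (a1 r k b : nat) (Fq : R) :
  (1 <= a1)%N -> (a1.+1 <= r)%N -> k = (r %/ a1.+1 + 1)%N -> 0 < Fq ->
  INR b * Fq * INR (a1.+1)`! <= 4 * INR (r + k) ^ a1.+1 ->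
  INR r ^ a1 * (2 * exp 1 * gamma_const * INR a1.+1) <= INR (a1`!) * Fq ->
  (b <= k)%N.
Proof.
move=> ha1 har hk hF H1 H2.
set al := INR a1.+1.
have hal : 2 <= al.
  rewrite /al S_INR; have := le_INR 1 a1 (leP ha1); rewrite /=; lra.
set x := INR r.
have hx : al <= x by apply: le_INR; apply/leP.
set K := INR k.
have hK1 : x < (K + 1) * al.
  have := ltn_ceil r (ltn0Sn a1) => /ltP /lt_INR.
  rewrite mulnE mult_INR -/x -/al /K hk S_INR.
  rewrite addnE plus_INR; simpl INR; lra.
have hK2 : K * al <= x + al.
  have := leq_divM r a1.+1 => /leP /le_INR.
  rewrite mulnE mult_INR -/x -/al /K hk addnE plus_INR /=; lra.
have hR : INR (r + k) <= x * (1 + 2 / INR a1.+1).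
  rewrite INR_addn -/x -/K -/al.
  have : K <= 2 * x / al.
    apply: (Rmult_le_reg_r al); first lra.
    have -> : 2 * x / al * al = 2 * x by field; lra.
    lra.
  have -> : x * (1 + 2 / al) = x + 2 * x / al by field; lra.
  lra.
have hRp : INR (r + k) ^ a1.+1 <= (x * (1 + 2 / INR a1.+1)) ^ a1.+1.
  by apply: pow_incr; split; [apply: pos_INR | exact: hR].
rewrite Rpow_mult_distr in hRp.
have hE := one_plus_pow (ltn0Sn a1).
have e3 := exp_le_3.
have e0 := exp_pos 1.
have hxa1 : 0 < x ^ a1 by apply: pow_lt; lra.
have hfa : 0 < INR a1`! by apply: lt_0_INR; apply/ltP; apply: fact_gt0.
have hfact : INR (a1.+1)`! = al * INR a1`! by rewrite factS mulnE mult_INR.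
rewrite hfact in H1.
have hb0 : 0 <= INR b by apply: pos_INR.
have S1 : INR b * Fq * (al * INR a1`!) <= 4 * (x ^ a1.+1 * (exp 1 * exp 1)).
  apply: Rle_trans H1 _; apply: Rmult_le_compat_l; first lra.
  apply: Rle_trans hRp _; apply: Rmult_le_compat_l; first by apply: pow_le; lra.
  exact: hE.
have S2 : INR b * al * (x ^ a1 * (2 * exp 1 * gamma_const * al)) <=
          INR b * al * (INR a1`! * Fq).
  by apply: Rmult_le_compat_l; [apply: Rmult_le_pos; lra | exact: H2].
have S3 : INR b * (2 * exp 1 * gamma_const * al * al) <= 4 * x * (exp 1 * exp 1).
  apply: (Rmult_le_reg_r (x ^ a1)); first exact: hxa1.
  apply: (Rle_trans _ (INR b * al * (x ^ a1 * (2 * exp 1 * gamma_const * al)))).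
    by right; ring.
  apply: (Rle_trans _ _ _ S2).
  apply: (Rle_trans _ (INR b * Fq * (al * INR a1`!))); first by right; ring.
  apply: (Rle_trans _ _ _ S1); right; rewrite [x ^ a1.+1]/=; ring.
have S4 : INR b * (gamma_const * al) <= 2 * x * exp 1 / al.
  apply: (Rmult_le_reg_r (2 * exp 1 * al)); first nra.
  have -> : 2 * x * exp 1 / al * (2 * exp 1 * al) = 4 * x * (exp 1 * exp 1).
    by field; lra.
  apply: Rle_trans S3; right; ring.
have hg : 2 * exp 1 <= gamma_const * al by rewrite /gamma_const; lra.
have S5 : INR b < K + 1.
  have : 2 * x * exp 1 / al <= x * gamma_const.
    apply: (Rmult_le_reg_r al); first lra.
    have -> : 2 * x * exp 1 / al * al = x * (2 * exp 1) by field; lra.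
    have : 0 <= x by lra.
    rewrite /gamma_const in hg *; nra.
  have : x * gamma_const < (K + 1) * al * gamma_const.
    by apply: Rmult_lt_compat_r; [rewrite /gamma_const; lra | exact: hK1].
  rewrite /gamma_const in S4 *; nra.
have : (b < k + 1)%N.
  apply/ltP; apply: INR_lt; rewrite INR_addn /=; exact: S5.
by rewrite addn1 ltnS.
Qed.

End R2Sec.

Lemma nat_ident alpha eps l h t : (1 <= t)%N -> (eps < h)%N -> (h <= alpha * l + eps)%N ->
  (((h - eps) * t).-1 * (alpha * (l * t) + h * t - ((h - eps) * t).-1) + f_exp alpha eps l h t
  = alpha * (l * t) * (h * t))%N.
Proof.
move=> ht he hh.
rewrite /f_exp mulnA.
move: (alpha * l)%N hh => P hh.
have [m hm] : exists m, h = (eps + m.+1)%N by exists (h - eps).-1; lia.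
have [n hn] : exists n, P = (m.+1 + n)%N by exists (P - m.+1)%N; lia.
have [t' ht'] : exists t', t = t'.+1 by exists t.-1; lia.
subst h P t.
have -> : (eps + m.+1 - eps = m.+1)%N by lia.
have -> : (m.+1 + n + eps - (eps + m.+1) = n)%N by lia.
have -> : (m.+1 + n + 2 * eps - (eps + m.+1) = n + eps)%N by lia.
have -> : ((m.+1 * t'.+1).-1 = m.+1 * t'.+1 - 1)%N by lia.
nia.
Qed.

Lemma ffact_leq_exp n m : (n ^_ m <= n ^ m)%N.
Proof.
elim: m => [|m IH]; first by rewrite ffactn0.
by rewrite ffactnSr expnSr leq_mul // leq_subr.
Qed.

Local Open Scope R_scope.


Theorem mainTheorem15 (F : finFieldType) (q alpha eps l t h r : nat) :
  #|F| = q ->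
  (2 <= alpha)%N -> (1 <= l)%N -> (1 <= t)%N ->
  (1 <= h)%N -> (h <= alpha * l + eps)%N ->
  Rle (INR r) (Rmult (beta_const alpha)
            (Rpower (INR q) (Rdiv (INR (f_exp alpha eps l h t)) (INR (alpha - 1))))) ->
  exists A : 'I_r -> 'M[F]_(l * t, h * t),
    forall s : 'I_alpha -> 'I_r,
      (forall i j : 'I_alpha, (i < j)%N -> (s i < s j)%N) ->
      ((h - eps) * t <= \rank (stack A s))%N.
Proof.
move=> hq ha hl ht hh hhe hr.
case: (leqP h eps) => hme.
  exists (fun _ => 0%R) => s _.
  by have -> : (h - eps = 0)%N by apply/eqP; rewrite subn_eq0.
case: (ltnP r alpha) => hra.
  exists (fun _ => 0%R) => s hs; exfalso.
  have sinj : injective s.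
    move=> i j eij; apply/eqP; case: (ltngtP i j) => // hij.
    - by have := hs _ _ hij; rewrite eij ltnn.
    - by have := hs _ _ hij; rewrite eij ltnn.
    - by apply/eqP; apply: val_inj.
  by have := leq_card s sinj; rewrite !card_ord leqNgt hra.
have ha0 : (0 < alpha)%N by apply: leq_trans ha.
have hr0 : (0 < r)%N by apply: leq_trans hra.
subst q.
set Q := INR #|F|.
have Q2 : 2 <= Q := q_ge2 F.
set a1 := (alpha - 1)%N.
have ea : alpha = a1.+1 by rewrite /a1; lia.
have ha1 : (1 <= a1)%N by rewrite /a1; lia.
set f := f_exp alpha eps l h t.
set k := (r %/ alpha + 1)%N.
set RR := (r + k)%N.
set s0 := ((h - eps) * t).-1.
have hRR : (alpha <= RR)%N by rewrite /RR; lia.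
have [A0 HA0] := avg F (l * t) (h * t) s0 hRR.
have sumN : (\sum_(i < alpha) (l * t) = alpha * (l * t))%N.
  by rewrite sum_nat_const card_ord.
rewrite sumN card_mx -expnM in HA0.
set Nn := (alpha * (l * t))%N in HA0.
set b := #|badset alpha s0 A0| in HA0.
set I := #|[set s | incr s]| in HA0.
set L := #|lowrk F Nn (h * t) s0| in HA0.
have hs0N : (s0 <= Nn)%N.
  rewrite /s0 /Nn; apply: leq_trans (leq_pred _) _; rewrite mulnA leq_mul2r.
  by apply/orP; right; lia.
have hs0M : (s0 <= h * t)%N.
  by rewrite /s0; apply: leq_trans (leq_pred _) _; rewrite leq_mul2r leq_subr orbT.
have E : (s0 * (Nn + h * t - s0) + f = l * t * (h * t) * alpha)%N.
  by move: (nat_ident ht hme hhe); rewrite -/s0 -/Nn -/f => ->; rewrite /Nn; nia.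
have hx : 0 <= / Q <= 1 / 2.
  split; first by apply: Rlt_le; apply: Rinv_0_lt_compat; lra.
  rewrite /Rdiv Rmult_1_l; apply: Rinv_le_contravar; lra.
have L1 : INR L * Pd (/ Q) (Nn - s0) <= Q ^ (s0 * (Nn + h * t - s0)) :=
  lowrk_bound F hs0N hs0M.
have P4 := Pd_quarter (Nn - s0) hx.
set E1 := (s0 * (Nn + h * t - s0))%N in L1 E.
have QE1 : 0 < Q ^ E1 by apply: pow_lt; lra.
have Qf : 0 < Q ^ f by apply: pow_lt; lra.
have hL : INR L <= 4 * Q ^ E1.
  have hL0 : 0 <= INR L by apply: pos_INR.
  nra.
have HA0R : INR b * (Q ^ f * Q ^ E1) <= INR I * INR L.
  have := INR_leq HA0; rewrite !INR_muln INR_expn -E pow_addn => H.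
  by rewrite (Rmult_comm (Q ^ f)); exact: H.
have hI : INR I * INR alpha`! <= INR RR ^ alpha.
  rewrite -INR_muln -INR_expn; apply: INR_leq.
  apply: leq_trans (ffact_leq_exp RR alpha); rewrite -bin_ffact leq_mul2r.
  by rewrite incr_card orbT.
have H1 : INR b * Q ^ f * INR (a1.+1)`! <= 4 * INR (r + k) ^ a1.+1.
  rewrite -ea.
  have hI0 : 0 <= INR I by apply: pos_INR.
  have hf0 : 0 < INR alpha`! by apply: lt_0_INR; apply/ltP; apply: fact_gt0.
  have S : INR b * Q ^ f <= 4 * INR I.
    apply: (Rmult_le_reg_r (Q ^ E1)); first exact: QE1.
    apply: Rle_trans (_ : INR I * INR L <= _).
      by apply: Rle_trans HA0R; right; ring.
    nra.
  apply: Rle_trans (_ : 4 * INR I * INR alpha`! <= _).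
    by apply: Rmult_le_compat_r; lra.
  rewrite -/RR; nra.
have H2 : INR r ^ a1 * (2 * exp 1 * gamma_const * INR a1.+1) <= INR a1`! * Q ^ f.
  rewrite -ea; move: hr; rewrite /beta_const -/a1 -/f -/Q.
  set D := 2 * exp 1 * gamma_const * INR alpha.
  have hD : 0 < D.
    have : 0 < INR alpha by apply: lt_0_INR; apply/ltP.
    have := exp_pos 1; rewrite /D /gamma_const => h1 h2.
    apply: Rmult_lt_0_compat; last lra.
    apply: Rmult_lt_0_compat; last lra.
    lra.
  have hf0 : 0 < INR a1`! by apply: lt_0_INR; apply/ltP; apply: fact_gt0.
  set X := INR a1`! / D.
  have hX : 0 < X by apply: Rdiv_lt_0_compat.
  have ha1R : 0 < INR a1 by apply: lt_0_INR; apply/ltP.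
  have e1 : Rpower X (1 / INR a1) ^ a1 = X.
    rewrite -Rpower_pow; last by rewrite /Rpower; apply: exp_pos.
    rewrite Rpower_mult.
    have -> : 1 / INR a1 * INR a1 = 1 by field; lra.
    exact: Rpower_1.
  have e2 : Rpower Q (INR f / INR a1) ^ a1 = Q ^ f.
    rewrite -Rpower_pow; last by rewrite /Rpower; apply: exp_pos.
    rewrite Rpower_mult.
    have -> : INR f / INR a1 * INR a1 = INR f by field; lra.
    by apply: Rpower_pow; lra.
  move=> hr.
  have : INR r ^ a1 <= (Rpower X (1 / INR a1) * Rpower Q (INR f / INR a1)) ^ a1.
    by apply: pow_incr; split; [apply: pos_INR | exact: hr].
  rewrite Rpow_mult_distr e1 e2 => hp.
  apply: Rle_trans (_ : X * Q ^ f * D <= _).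
    by apply: Rmult_le_compat_r; lra.
  right; rewrite /X; field; lra.
have hbk : (b <= k)%N.
  apply: (key_real ha1 _ _ Qf H1 H2); first by rewrite -ea.
  by rewrite /k ea.
have hrk : (r + k <= RR)%N by [].
have [A HA] := delete ha0 hr0 hbk hrk.
exists A => s hs; have := HA s hs.
have -> : s0.+1 = ((h - eps) * t)%N by rewrite /s0 prednK // muln_gt0 subn_gt0 hme.
done.
Qed.
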